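(* Let $(H,\theta)$ be a strengthened arity, and let $T$ be the (least) fixed point, i.e. the initial algebra, of the endofunctor $F:=I+H$ of $\mathrm{End}^\omega({\mathsf{Set}})$, $X\mapsto I+H(X)$. Then $T$ is $\omega$-cocontinuous and comes equipped with a structure of monad together with a representation of the arity $\tilde H$, and $T$ with this structure is an initial object of the category of $\tilde H$-representations.
   Context: Conventions: for endofunctors $F,G$ of ${\mathsf{Set}}$, $F\cdot G$ denotes $F\circ G$; whiskering is written $F\alpha$, $\alpha F$; $I$ is the identity functor. An endofunctor is $\omega$-cocontinuous if it preserves colimits of $\omega$-chains; $\mathrm{End}^\omega({\mathsf{Set}})$ is the category of such endofunctors. $\mathrm{End}^\omega_*({\mathsf{Set}})$ is the category of pointed $\omega$-cocontinuous endofunctors $(F,e)$, $e\colon I\to F$; pointed endofunctors compose as $(Z_1\cdot Z_2,e_1\cdot e_2)$ with horizontal composite. A strengthened arity is a pair $(H,\theta)$ where $H$ is an $\omega$-cocontinuous endofunctor of $\mathrm{End}^\omega({\mathsf{Set}})$ and $\theta$ is a natural transformation with components $\theta_{X,(Z,e)}\colon H(X)\cdot Z\to H(X\cdot Z)$, natural in $X$ and $(Z,e)$, such that $\theta_{X,(I,1_I)}=1_{H(X)}$ and $\theta_{X,(Z_1\cdot Z_2,e_1\cdot e_2)}=\theta_{X\cdot Z_1,(Z_2,e_2)}\circ(\theta_{X,(Z_1,e_1)}Z_2)$. Modules: for a monad $R=(R,\mu,\eta)$ on ${\mathsf{Set}}$, an $R$-module is a functor $M\colon{\mathsf{Set}}\to{\mathsf{Set}}$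 with $\rho^M\colon M\cdot R\to M$ satisfying $\rho^M\circ\rho^MR=\rho^M\circ M\mu$, $\rho^M\circ M\eta=1_M$; module morphisms are natural transformations commuting with actions. $R$ is an $R$-module via $\mu$. For a monad morphism $f\colon R\to S$ and $S$-module $N$, $f^*N$ is $N$ with $R$-action $\rho^N\circ Nf$; $f$ itself is an $R$-module morphism $R\to f^*S$. The arity $\tilde H$ associated to $(H,\theta)$: for an $\omega$-cocontinuous monad $R$, $\tilde H(R)$ is the $R$-module $H(R)$ with action $H(\mu)\circ\theta_{R,(R,\eta)}\colon H(R)\cdot R\to H(R)$; for a monad morphism $f\colon R\to S$, $\tilde H(f)$ is $H(f)\colon H(R)\to f^*H(S)$, a morphism of $R$-modules. An $\tilde H$-representation is a pair $(R,r)$ with $R$ a monad on ${\mathsf{Set}}$ with $\omega$-cocontinuous underlying functor and $r\colon\tilde H(R)\to R$ a morphism of $R$-modules. A morphism $(R,r)\to(S,s)$ is a monad morphism $m\colon R\to S$ with $m\circ r=s\circ H(m)$ (as morphisms of $R$-modules $H(R)\to m^*S$). *)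

(* Defs.v *)
(* Set := Rocq's Type (universe-level sets).
   Endofunctors of Set are represented by their data (object map and
   morphism map); the functor laws, naturality, omega-cocontinuity etc.
   are separate predicates.  Primitive projections give definitional
   record eta, so that X . I, I . X and X reduce to the same functor and
   composition is strictly associative (as in the paper). *)
Set Implicit Arguments.
Unset Strict Implicit.
Set Primitive Projections.

Record Functor := MkFunctor {
  fobj :> Type -> Type;
  fmap : forall A B : Type, (A -> B) -> fobj A -> fobj B }.
Arguments fmap f {A B} _ _.
Arguments MkFunctor : clear implicits.

Definition is_functor (F : Functor) : Prop :=
  (forall (A : Type) (x : F A), fmap F (fun y : A => y) x = x) /\
  (forall (A B C : Type) (f : A -> B) (g : B -> C) (x : F A),
      fmap F (fun y => g (f y)) x = fmap F g (fmap F f x)).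

Definition IdF : Functor := MkFunctor (fun A => A) (fun A B f => f).
Definition comp (F G : Functor) : Functor :=
  MkFunctor (fun A => F (G A)) (fun A B f => fmap F (fmap G f)).
Definition SumF (F G : Functor) : Functor :=
  MkFunctor (fun A => (F A + G A)%type)
    (fun A B f x => match x with
                    | inl y => inl (fmap F f y)
                    | inr z => inr (fmap G f z) end).

Definition Nt (F G : Functor) := forall A : Type, F A -> G A.
Definition natural (F G : Functor) (a : Nt F G) : Prop :=
  forall (A B : Type) (f : A -> B) (x : F A), a B (fmap F f x) = fmap G f (a A x).
Definition neq (F G : Functor) (a b : Nt F G) : Prop :=
  forall (A : Type) (x : F A), a A x = b A x.

Definition idn (F : Functor) : Nt F F := fun A x => x.
Arguments idn : clear implicits.
Definition vcomp (F G K : Functor) (b : Nt G K) (a : Nt F G) : Nt F K :=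
  fun A x => b A (a A x).
Definition hcomp (F F' G G' : Functor) (a : Nt F F') (f : Nt G G')
  : Nt (comp F G) (comp F' G') := fun A x => fmap F' (f A) (a (G A) x).
Definition whiskerR (F G : Functor) (a : Nt F G) (Z : Functor)
  : Nt (comp F Z) (comp G Z) := fun A => a (Z A).
Arguments whiskerR {F G} a Z.
Definition sum_nat (F G G' : Functor) (h : Nt G G')
  : Nt (SumF F G) (SumF F G') :=
  fun A x => match x with inl y => inl y | inr z => inr (h A z) end.

Arguments sum_nat F {G G'} h.
Definition is_colim_set (A : nat -> Type) (a : forall n, A n -> A (S n))
  (C : Type) (c : forall n, A n -> C) : Prop :=
  (forall n x, c (S n) (a n x) = c n x) /\
  forall (D : Type) (d : forall n, A n -> D),
    (forall n x, d (S n) (a n x) = d n x) ->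
    exists u : C -> D, (forall n x, u (c n x) = d n x) /\
      forall v : C -> D, (forall n x, v (c n x) = d n x) -> forall y, v y = u y.

Definition omega_cocont (F : Functor) : Prop :=
  forall (A : nat -> Type) (a : forall n, A n -> A (S n)) (C : Type)
         (c : forall n, A n -> C),
    is_colim_set a c ->
    is_colim_set (A := fun n => F (A n)) (fun n => fmap F (a n)) (fun n => fmap F (c n)).

(* objects of End^omega(Set) *)
Definition ocf (F : Functor) : Prop := is_functor F /\ omega_cocont F.

Definition is_colim_end (X : nat -> Functor) (x : forall n, Nt (X n) (X (S n)))
  (L : Functor) (l : forall n, Nt (X n) L) : Prop :=
  ocf L /\ (forall n, natural (l n)) /\
  (forall n, neq (vcomp (l (S n)) (x n)) (l n)) /\
  forall (D : Functor) (d : forall n, Nt (X n) D),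
    ocf D -> (forall n, natural (d n)) ->
    (forall n, neq (vcomp (d (S n)) (x n)) (d n)) ->
    exists u : Nt L D, natural u /\ (forall n, neq (vcomp u (l n)) (d n)) /\
      forall v : Nt L D, natural v -> (forall n, neq (vcomp v (l n)) (d n)) ->
        neq v u.

(* Data of a (would-be) strengthened arity.  H is given on all functors,
   but all axioms only constrain its restriction to End^omega(Set). *)
Record ArityData := MkArityData {
  Hobj :> Functor -> Functor;
  Hmor : forall X Y : Functor, Nt X Y -> Nt (Hobj X) (Hobj Y);
  Hth  : forall X Z : Functor, Nt IdF Z -> Nt (comp (Hobj X) Z) (Hobj (comp X Z)) }.
Arguments Hmor _ {X Y} _ : rename.
Arguments Hth _ X {Z} _ : rename.

Definition strengthened_arity (H : ArityData) : Prop :=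
  (forall X, ocf X -> ocf (H X)) /\
  (forall X Y (a : Nt X Y), ocf X -> ocf Y -> natural a -> natural (Hmor H a)) /\
  (forall X, ocf X -> neq (Hmor H (idn X)) (idn (H X))) /\
  (forall X Y K (a : Nt X Y) (b : Nt Y K), ocf X -> ocf Y -> ocf K ->
     natural a -> natural b ->
     neq (Hmor H (vcomp b a)) (vcomp (Hmor H b) (Hmor H a))) /\
  (forall (X : nat -> Functor) (x : forall n, Nt (X n) (X (S n)))
          (L : Functor) (l : forall n, Nt (X n) L),
     (forall n, ocf (X n)) -> (forall n, natural (x n)) ->
     is_colim_end x l ->
     is_colim_end (X := fun n => H (X n)) (fun n => Hmor H (x n))
                  (fun n => Hmor H (l n))) /\
  (forall X Z (e : Nt IdF Z), ocf X -> ocf Z -> natural e ->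
     natural (Hth H X e)) /\
  (forall X X' Z Z' (e : Nt IdF Z) (e' : Nt IdF Z') (a : Nt X X') (f : Nt Z Z'),
     ocf X -> ocf X' -> ocf Z -> ocf Z' -> natural e -> natural e' ->
     natural a -> natural f -> neq (vcomp f e) e' ->
     neq (vcomp (Hth H X' e') (hcomp (Hmor H a) f))
         (vcomp (Hmor H (hcomp a f)) (Hth H X e))) /\
  (forall X, ocf X -> neq (Hth H X (idn IdF)) (idn (H X))) /\
  (forall X Z1 Z2 (e1 : Nt IdF Z1) (e2 : Nt IdF Z2),
     ocf X -> ocf Z1 -> ocf Z2 -> natural e1 -> natural e2 ->
     neq (Hth H X (hcomp e1 e2))
         (vcomp (Hth H (comp X Z1) e2) (whiskerR (Hth H X e1) Z2))).

Definition initial_algebra (H : ArityData) (T : Functor)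
  (alpha : Nt (SumF IdF (H T)) T) : Prop :=
  ocf T /\ natural alpha /\
  forall (X : Functor) (beta : Nt (SumF IdF (H X)) X),
    ocf X -> natural beta ->
    exists h : Nt T X, natural h /\
      neq (vcomp h alpha) (vcomp beta (sum_nat IdF (Hmor H h))) /\
      forall h' : Nt T X, natural h' ->
        neq (vcomp h' alpha) (vcomp beta (sum_nat IdF (Hmor H h'))) -> neq h' h.
Arguments initial_algebra : clear implicits.

Definition is_monad (R : Functor) (eta : Nt IdF R) (mu : Nt (comp R R) R) : Prop :=
  is_functor R /\ natural eta /\ natural mu /\
  (forall A (x : R A), mu A (eta (R A) x) = x) /\
  (forall A (x : R A), mu A (fmap R (eta A) x) = x) /\
  (forall A (x : R (R (R A))), mu A (mu (R A) x) = mu A (fmap R (mu A) x)).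

Definition monad_morphism (R S : Functor) (etaR : Nt IdF R) (muR : Nt (comp R R) R)
  (etaS : Nt IdF S) (muS : Nt (comp S S) S) (m : Nt R S) : Prop :=
  natural m /\ neq (vcomp m etaR) etaS /\
  neq (vcomp m muR) (vcomp muS (hcomp m m)).

Definition tildeH_action (H : ArityData) (R : Functor) (eta : Nt IdF R)
  (mu : Nt (comp R R) R) : Nt (comp (H R) R) (H R) :=
  vcomp (Hmor H mu) (Hth H R eta).
Arguments tildeH_action : clear implicits.

Definition is_representation (H : ArityData) (R : Functor) (eta : Nt IdF R)
  (mu : Nt (comp R R) R) (r : Nt (H R) R) : Prop :=
  ocf R /\ is_monad eta mu /\
  natural r /\
  neq (vcomp r (tildeH_action H R eta mu)) (vcomp mu (whiskerR r R)).
Arguments is_representation : clear implicits.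

Definition rep_morphism (H : ArityData) (R S : Functor)
  (etaR : Nt IdF R) (muR : Nt (comp R R) R) (r : Nt (H R) R)
  (etaS : Nt IdF S) (muS : Nt (comp S S) S) (s : Nt (H S) S) (m : Nt R S) : Prop :=
  monad_morphism etaR muR etaS muS m /\
  neq (vcomp m r) (vcomp s (Hmor H m)).
Arguments rep_morphism : clear implicits.

(* Main.v *)
Require Import Defs.
From Stdlib Require Import FunctionalExtensionality PropExtensionality ProofIrrelevance IndefiniteDescription Relations.

Lemma sig_eq {T : Type} {P : T -> Prop} (x y : sig P) : proj1_sig x = proj1_sig y -> x = y.
Proof. destruct x as [x px], y as [y py]; simpl; intros ->; f_equal; apply proof_irrelevance. Qed.

Definition med {A : nat -> Type} {a : forall n, A n -> A (S n)} {C : Type} {c : forall n, A n -> C}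
  (Hc : is_colim_set a c) (D : Type) (d : forall n, A n -> D)
  (Hd : forall n x, d (S n) (a n x) = d n x) : C -> D :=
  proj1_sig (constructive_indefinite_description _ (proj2 Hc D d Hd)).

Lemma med_spec {A : nat -> Type} {a : forall n, A n -> A (S n)} {C : Type} {c : forall n, A n -> C}
  (Hc : is_colim_set a c) D d Hd n x : med Hc D d Hd (c n x) = d n x.
Proof. unfold med; destruct (constructive_indefinite_description _ _) as [u [H1 H2]]; simpl; auto. Qed.

Lemma med_uniq {A : nat -> Type} {a : forall n, A n -> A (S n)} {C : Type} {c : forall n, A n -> C}
  (Hc : is_colim_set a c) D d Hd (v : C -> D) :
  (forall n x, v (c n x) = d n x) -> forall y, v y = med Hc D d Hd y.
Proof. unfold med; destruct (constructive_indefinite_description _ _) as [u [H1 H2]]; simpl; auto. Qed.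

Lemma colim_ext {A : nat -> Type} {a : forall n, A n -> A (S n)} {C : Type} {c : forall n, A n -> C}
  (Hc : is_colim_set a c) (D : Type) (v1 v2 : C -> D) :
  (forall n x, v1 (c n x) = v2 (c n x)) -> forall y, v1 y = v2 y.
Proof.
  intros E y.
  assert (Hd : forall n x, v1 (c (S n) (a n x)) = v1 (c n x)).
  { intros; now rewrite (proj1 Hc). }
  rewrite (med_uniq Hc D _ Hd v1 (fun _ _ => eq_refl)).
  symmetry; apply (med_uniq Hc D _ Hd v2). intros; now rewrite E.
Qed.

Lemma colim_iso {A : nat -> Type} {a : forall n, A n -> A (S n)} {C : Type} {c : forall n, A n -> C}
  (Hc : is_colim_set a c) (C' : Type) (c' : forall n, A n -> C') (h : C -> C') (g : C' -> C) :
  (forall n x, h (c n x) = c' n x) -> (forall y, h (g y) = y) -> (forall z, g (h z) = z) ->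
  is_colim_set a c'.
Proof.
  intros Hh hg gh. split.
  - intros n x. rewrite <- !Hh. now rewrite (proj1 Hc).
  - intros D d Hd. exists (fun y => med Hc D d Hd (g y)). split.
    + intros n x. rewrite <- Hh, gh. apply med_spec.
    + intros v Hv y. rewrite <- (hg y) at 1.
      apply (med_uniq Hc D d Hd (fun z => v (h z))). intros; now rewrite Hh.
Qed.

Definition Sg (A : nat -> Type) := {n : nat & A n}.
Inductive stp {A : nat -> Type} (a : forall n, A n -> A (S n)) : Sg A -> Sg A -> Prop :=
 | stp_i n x : stp a (existT _ n x) (existT _ (S n) (a n x)).
Definition ceq {A : nat -> Type} (a : forall n, A n -> A (S n)) := clos_refl_sym_trans (Sg A) (stp a).
Definition Colim (A : nat -> Type) (a : forall n, A n -> A (S n)) :=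
  {P : Sg A -> Prop | exists s, P = ceq a s}.
Definition cinj {A : nat -> Type} (a : forall n, A n -> A (S n)) n (x : A n) : Colim A a :=
  exist _ (ceq a (existT _ n x)) (ex_intro _ _ eq_refl).
Definition crep {A : nat -> Type} {a : forall n, A n -> A (S n)} (y : Colim A a) : Sg A :=
  proj1_sig (constructive_indefinite_description _ (proj2_sig y)).
Definition crec {A : nat -> Type} {a : forall n, A n -> A (S n)} {D : Type}
  (d : forall n, A n -> D) (y : Colim A a) : D := d (projT1 (crep y)) (projT2 (crep y)).

Lemma crep_spec {A : nat -> Type} {a : forall n, A n -> A (S n)} (y : Colim A a) :
  proj1_sig y = ceq a (crep y).
Proof. unfold crep; destruct (constructive_indefinite_description _ _); simpl; auto. Qed.

Lemma ceq_resp {A : nat -> Type} {a : forall n, A n -> A (S n)} {D : Type} (d : forall n, A n -> D) :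
  (forall n x, d (S n) (a n x) = d n x) ->
  forall s t, ceq a s t -> d (projT1 s) (projT2 s) = d (projT1 t) (projT2 t).
Proof.
  intros Hd s t H; induction H as [s t H| s | s t _ IH | s t u _ IH1 _ IH2]; auto.
  - destruct H; simpl; auto.
  - congruence.
Qed.

Lemma crep_cinj {A : nat -> Type} {a : forall n, A n -> A (S n)} n x :
  ceq a (existT _ n x) (crep (cinj a n x)).
Proof.
  pose proof (crep_spec (cinj a n x)) as E; simpl in E.
  rewrite E. apply rst_refl.
Qed.

Lemma crec_inj {A : nat -> Type} {a : forall n, A n -> A (S n)} {D : Type} (d : forall n, A n -> D) :
  (forall n x, d (S n) (a n x) = d n x) -> forall n x, crec (a:=a) d (cinj a n x) = d n x.
Proof.
  intros Hd n x. unfold crec. symmetry.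
  apply (ceq_resp d Hd (existT _ n x)). apply crep_cinj.
Qed.

Lemma cinj_rep {A : nat -> Type} {a : forall n, A n -> A (S n)} (y : Colim A a) :
  y = cinj a (projT1 (crep y)) (projT2 (crep y)).
Proof. apply sig_eq. simpl. rewrite crep_spec. now destruct (crep y). Qed.

Lemma cinj_step {A : nat -> Type} (a : forall n, A n -> A (S n)) n x :
  cinj a (S n) (a n x) = cinj a n x.
Proof.
  apply sig_eq; simpl. extensionality t. apply propositional_extensionality. split; intro H.
  - eapply rst_trans; [|exact H]. apply rst_step. constructor.
  - eapply rst_trans; [|exact H]. apply rst_sym, rst_step. constructor.
Qed.

Lemma Colim_is {A : nat -> Type} (a : forall n, A n -> A (S n)) : is_colim_set a (cinj a).
Proof.
  split. { apply cinj_step. }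
  intros D d Hd. exists (crec d). split.
  - apply crec_inj; auto.
  - intros v Hv y. rewrite (cinj_rep y) at 1. rewrite Hv. reflexivity.
Qed.

Lemma nt_ext (F G : Functor) (a b : Nt F G) : neq a b -> a = b.
Proof. intro E. unfold Nt. extensionality A. extensionality x. apply E. Qed.

Lemma fmap_id' (F : Functor) : is_functor F -> forall A (f : A -> A) x, (forall y, f y = y) -> fmap F f x = x.
Proof. intros [H1 H2] A f x E. replace f with (fun y : A => y) by (extensionality y; first [apply E | symmetry; apply E]). apply H1. Qed.

Lemma fmap_comp' (F : Functor) : is_functor F -> forall A B C (f : A -> B) (g : B -> C) (h : A -> C) x,
  (forall y, g (f y) = h y) -> fmap F g (fmap F f x) = fmap F h x.
Proof. intros [H1 H2] A B C f g h x E. replace h with (fun y => g (f y)) by (extensionality y; first [apply E | symmetry; apply E]). symmetry; apply H2. Qed.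

Definition ColimF (X : nat -> Functor) (x : forall n, Nt (X n) (X (S n))) : Functor :=
  MkFunctor (fun A => Colim (fun n => X n A) (fun n => x n A))
    (fun A B f => crec (fun n y => cinj (fun n => x n B) n (fmap (X n) f y))).

Lemma cf_map_inj (X : nat -> Functor) (x : forall n, Nt (X n) (X (S n))) :
  (forall n, natural (x n)) -> forall A B (f : A -> B) n y,
  fmap (ColimF X x) f (cinj (fun n => x n A) n y) = cinj (fun n => x n B) n (fmap (X n) f y).
Proof.
  intros Hn A B f n y. simpl.
  rewrite (crec_inj (fun m z => cinj (fun n => x n B) m (fmap (X m) f z))); [reflexivity|]. intros m z.
  rewrite <- (Hn m A B f z). apply (cinj_step (fun n0 => x n0 B)).
Qed.

Lemma ColimF_functor (X : nat -> Functor) (x : forall n, Nt (X n) (X (S n))) :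
  (forall n, natural (x n)) -> (forall n, is_functor (X n)) -> is_functor (ColimF X x).
Proof.
  intros Hn Hf. split.
  - intros A z. apply (colim_ext (Colim_is (fun n => x n A)) _ (fmap (ColimF X x) (fun y => y)) (fun y => y)).
    intros n y. rewrite cf_map_inj by auto. f_equal. apply (proj1 (Hf n)).
  - intros A B C f g z. apply (colim_ext (Colim_is (fun n => x n A)) _
      (fmap (ColimF X x) (fun y => g (f y))) (fun z => fmap (ColimF X x) g (fmap (ColimF X x) f z))).
    intros n y. rewrite !cf_map_inj by auto. f_equal. apply (proj2 (Hf n)).
Qed.

Lemma ColimF_ocf (X : nat -> Functor) (x : forall n, Nt (X n) (X (S n))) :
  (forall n, natural (x n)) -> (forall n, ocf (X n)) -> ocf (ColimF X x).
Proof.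
  intros Hn Ho.
  assert (Hfun : is_functor (ColimF X x)) by (apply ColimF_functor; auto; intro n; apply Ho).
  split; [exact Hfun|].
  intros A a C c Hc.
  set (CF := ColimF X x).
  set (a2 := fun k => fmap CF (a k)).
  assert (Hg : forall n, is_colim_set (A := fun k => X n (A k)) (fun k => fmap (X n) (a k)) (fun k => fmap (X n) (c k)))
    by (intro n; apply (proj2 (Ho n)); auto).
  assert (Hgd : forall n k v, cinj a2 (S k) (cinj (fun m => x m (A (S k))) n (fmap (X n) (a k) v))
                             = cinj a2 k (cinj (fun m => x m (A k)) n v)).
  { intros n k v. rewrite <- cf_map_inj by auto. apply (cinj_step a2). }
  set (gn := fun n => med (Hg n) _ _ (Hgd n)).
  assert (Hgs : forall n k v, gn n (fmap (X n) (c k) v) = cinj a2 k (cinj (fun m => x m (A k)) n v)).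
  { intros n k v. unfold gn. apply (med_spec (Hg n)). }
  assert (Hgn : forall n u, gn (S n) (x n C u) = gn n u).
  { intros n. apply (colim_ext (Hg n)). intros k v.
    rewrite (Hn n). rewrite !Hgs.
    rewrite (cinj_step (fun m => x m (A k))). reflexivity. }
  assert (Hhc : forall k w, fmap CF (c (S k)) (a2 k w) = fmap CF (c k) w).
  { intros k w. unfold a2. apply fmap_comp'; auto. intro; apply (proj1 Hc). }
  set (g := crec (a := fun n => x n C) gn).
  set (h := crec (a := a2) (fun k => fmap CF (c k))).
  apply (colim_iso (Colim_is a2) _ _ h g).
  - intros k w. unfold h. rewrite (crec_inj (a:=a2) (fun k => fmap CF (c k)) Hhc). reflexivity.
  - apply (colim_ext (Colim_is (fun n => x n C)) _ (fun y => h (g y)) (fun y => y)).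
    intros n u. unfold g. rewrite crec_inj by exact Hgn.
    revert u. apply (colim_ext (Hg n) _ (fun u => h (gn n u)) (cinj _ n)).
    intros k v. rewrite Hgs. unfold h. rewrite crec_inj by exact Hhc.
    apply cf_map_inj; auto.
  - apply (colim_ext (Colim_is a2) _ (fun y => g (h y)) (fun y => y)).
    intros k. apply (colim_ext (Colim_is (fun m => x m (A k))) _
       (fun w => g (h (cinj a2 k w))) (cinj a2 k)).
    intros n v. unfold h. rewrite crec_inj by exact Hhc.
    unfold CF. rewrite cf_map_inj by auto. unfold g. rewrite crec_inj by exact Hgn.
    apply Hgs.
Qed.

Definition cfi (X : nat -> Functor) (x : forall n, Nt (X n) (X (S n))) n : Nt (X n) (ColimF X x) :=
  fun A => cinj (fun n => x n A) n.

Lemma ColimF_end (X : nat -> Functor) (x : forall n, Nt (X n) (X (S n))) :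
  (forall n, natural (x n)) -> (forall n, ocf (X n)) -> is_colim_end x (cfi X x).
Proof.
  intros Hn Ho. split; [apply ColimF_ocf; auto|]. split; [|split].
  - intros n A B f y. unfold cfi. symmetry; apply cf_map_inj; auto.
  - intros n A y. apply (cinj_step (fun m => x m A)).
  - intros D d HD Hdn Hdc.
    assert (Hc : forall A n y, d (S n) A (x n A y) = d n A y) by (intros; apply Hdc).
    exists (fun A => crec (fun n => d n A)). split; [|split].
    + intros A B f z. revert z.
      apply (colim_ext (Colim_is (fun n => x n A)) _
        (fun z => crec (fun n => d n B) (fmap (ColimF X x) f z)) (fun z => fmap D f (crec (fun n => d n A) z))).
      intros n y. rewrite cf_map_inj by auto. rewrite (crec_inj (fun n => d n B) (Hc B)), (crec_inj (fun n => d n A) (Hc A)). apply Hdn.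
    + intros n A y. unfold vcomp, cfi. now rewrite (crec_inj (fun n => d n A) (Hc A)).
    + intros v _ Hv A z. revert z.
      apply (colim_ext (Colim_is (fun n => x n A))). intros n y.
      rewrite (crec_inj (fun n => d n A) (Hc A)). apply Hv.
Qed.

Lemma end_pointwise (X : nat -> Functor) (x : forall n, Nt (X n) (X (S n))) (L : Functor)
  (l : forall n, Nt (X n) L) :
  (forall n, natural (x n)) -> (forall n, ocf (X n)) -> is_colim_end x l ->
  forall A, is_colim_set (A := fun n => X n A) (fun n => x n A) (fun n => l n A).
Proof.
  intros Hn Ho He.
  pose proof (ColimF_end X x Hn Ho) as Hc.
  destruct He as [HL [Hln [Hlc Hu]]].
  destruct (proj2 (proj2 (proj2 Hc)) L l HL Hln Hlc) as [v [Hvn [Hvc _]]].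
  destruct (Hu (ColimF X x) (cfi X x) (proj1 Hc) (proj1 (proj2 Hc)) (proj1 (proj2 (proj2 Hc))))
    as [u [Hun [Huc _]]].
  destruct (Hu L l HL Hln Hlc) as [w [_ [_ Hw]]].
  assert (Hvu : forall A z, v A (u A z) = z).
  { intros A z.
    assert (E1 : neq (vcomp v u) w).
    { apply Hw. - intros B C f y. unfold vcomp. rewrite Hun, Hvn. reflexivity.
      - intros n B y. unfold vcomp. pose proof (Huc n B y) as E; unfold vcomp in E; rewrite E. apply Hvc. }
    assert (E2 : neq (idn L) w).
    { apply Hw. - intros B C f y. reflexivity. - intros n B y. reflexivity. }
    transitivity (w A z). apply E1. symmetry; apply E2. }
  intro A.
  apply (colim_iso (Colim_is (fun n => x n A)) _ _ (v A) (u A)).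
  - intros n y. apply Hvc.
  - apply Hvu.
  - apply (colim_ext (Colim_is (fun n => x n A)) _ (fun z => u A (v A z)) (fun z => z)).
    intros n y. pose proof (Hvc n A y) as E. unfold vcomp in E. change (cinj (fun n => x n A) n y) with (cfi X x n A y). rewrite E.
    apply Huc.
Qed.

Lemma pw_to_end (X : nat -> Functor) (x : forall n, Nt (X n) (X (S n))) (L : Functor)
  (l : forall n, Nt (X n) L) :
  ocf L -> (forall n, natural (l n)) -> (forall n, neq (vcomp (l (S n)) (x n)) (l n)) ->
  (forall A, is_colim_set (A := fun n => X n A) (fun n => x n A) (fun n => l n A)) ->
  is_colim_end x l.
Proof.
  intros HL Hln Hlc Hpw. split; [auto|split; [auto|split; [auto|]]].
  intros D d HD Hdn Hdc.
  assert (Hc : forall A n y, d (S n) A (x n A y) = d n A y) by (intros; apply Hdc).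
  exists (fun A => med (Hpw A) (D A) (fun n => d n A) (Hc A)). split; [|split].
  - intros A B f z. revert z.
    apply (colim_ext (Hpw A) _ (fun z => med (Hpw B) (D B) (fun n => d n B) (Hc B) (fmap L f z))
                               (fun z => fmap D f (med (Hpw A) (D A) (fun n => d n A) (Hc A) z))).
    intros n y. rewrite <- Hln.
    rewrite (med_spec (Hpw B) _ (fun n => d n B) (Hc B) n (fmap (X n) f y)).
    rewrite (med_spec (Hpw A) _ (fun n => d n A) (Hc A) n y). apply Hdn.
  - intros n A y. unfold vcomp. apply (med_spec (Hpw A) _ (fun n => d n A) (Hc A) n y).
  - intros v _ Hv A z. apply (med_uniq (Hpw A)). intros n y. apply Hv.
Qed.

Lemma natural_idn F : natural (idn F).
Proof. intros A B f x; reflexivity. Qed.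
Lemma natural_vcomp F G K (b : Nt G K) (a : Nt F G) : natural a -> natural b -> natural (vcomp b a).
Proof. intros Ha Hb A B f x. unfold vcomp. now rewrite Ha, Hb. Qed.
Lemma natural_whisker F G (a : Nt F G) Z : natural a -> natural (whiskerR a Z).
Proof. intros Ha A B f x. unfold whiskerR. simpl. apply Ha. Qed.
Lemma natural_hcomp F F' G G' (a : Nt F F') (f : Nt G G') :
  is_functor F' -> natural a -> natural f -> natural (hcomp a f).
Proof.
  intros HF Ha Hf A B g x. unfold hcomp. simpl. rewrite Ha.
  rewrite (fmap_comp' F' HF _ _ _ (fmap G g) (f B) (fun y => fmap G' g (f A y))) by (intro; apply Hf).
  symmetry. apply (fmap_comp' F' HF). reflexivity.
Qed.
Lemma natural_sum F G G' (h : Nt G G') : natural h -> natural (sum_nat F h).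
Proof. intros Hh A B f [y|z]; simpl; auto. now rewrite Hh. Qed.

Lemma comp_ocf F G : ocf F -> ocf G -> ocf (comp F G).
Proof.
  intros [HF1 HF2] [HG1 HG2]. split.
  - split.
    + intros A x. simpl. apply (fmap_id' F); auto. intro; apply (proj1 HG1).
    + intros A B C f g x. simpl. rewrite (fmap_comp' F HF1 _ _ _ (fmap G f) (fmap G g) (fmap G (fun y => g (f y)))); auto.
      intro; symmetry; apply (proj2 HG1).
  - intros A a C c Hc. apply HF2, HG2, Hc.
Qed.

Lemma sum_colim (A B : nat -> Type) (a : forall n, A n -> A (S n)) (b : forall n, B n -> B (S n))
  C D (c : forall n, A n -> C) (d : forall n, B n -> D) :
  is_colim_set a c -> is_colim_set b d ->
  is_colim_set (A := fun n => (A n + B n)%type)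
    (fun n x => match x with inl y => inl (a n y) | inr z => inr (b n z) end)
    (fun n x => match x with inl y => inl (c n y) | inr z => inr (d n z) end).
Proof.
  intros Hc Hd. split.
  - intros n [y|z]; f_equal; [apply (proj1 Hc)|apply (proj1 Hd)].
  - intros E e He.
    assert (H1 : forall n y, e (S n) (inl (a n y)) = e n (inl y)) by (intros; apply (He n (inl y))).
    assert (H2 : forall n z, e (S n) (inr (b n z)) = e n (inr z)) by (intros; apply (He n (inr z))).
    exists (fun s => match s with inl y => med Hc E (fun n y => e n (inl y)) H1 y
                          | inr z => med Hd E (fun n z => e n (inr z)) H2 z end).
    split.
    + intros n [y|z]. apply (med_spec Hc _ (fun n y => e n (inl y))). apply (med_spec Hd _ (fun n z => e n (inr z))).
    + intros v Hv [y|z].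
      * apply (med_uniq Hc _ (fun n y => e n (inl y)) H1 (fun y => v (inl y))). intros; apply (Hv n (inl x)).
      * apply (med_uniq Hd _ (fun n z => e n (inr z)) H2 (fun z => v (inr z))). intros; apply (Hv n (inr x)).
Qed.

Lemma sumI_ocf F : ocf F -> ocf (SumF IdF F).
Proof.
  intros [HF1 HF2]. split.
  - split.
    + intros A [y|z]; simpl; f_equal. apply (proj1 HF1).
    + intros A B C f g [y|z]; simpl; f_equal. apply (proj2 HF1).
  - intros A a C c Hc. apply (sum_colim _ _ _ _ _ _ _ _ Hc (HF2 _ _ _ _ Hc)).
Qed.

Definition EmptyF : Functor := MkFunctor (fun _ => Empty_set) (fun A B f e => match e with end).
Lemma EmptyF_ocf : ocf EmptyF.
Proof.
  split. - split; intros; destruct x.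
  - intros A a C c Hc. split. + intros n x; destruct x.
    + intros D d Hd. exists (fun e : Empty_set => match e with end). split. intros n x; destruct x.
      intros v _ y; destruct y.
Qed.

Lemma H_ocf H : strengthened_arity H -> forall X, ocf X -> ocf (H X).
Proof. intros HS; apply HS. Qed.
Lemma H_nat H : strengthened_arity H -> forall X Y (a : Nt X Y), ocf X -> ocf Y -> natural a -> natural (Hmor H a).
Proof. intros HS; apply HS. Qed.
Lemma H_id H : strengthened_arity H -> forall X, ocf X -> Hmor H (idn X) = idn (H X).
Proof. intros HS X HX. apply nt_ext. apply HS; auto. Qed.
Lemma H_comp H : strengthened_arity H -> forall X Y K (a : Nt X Y) (b : Nt Y K), ocf X -> ocf Y -> ocf K ->
  natural a -> natural b -> forall A z, Hmor H b A (Hmor H a A z) = Hmor H (vcomp b a) A z.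
Proof. intros HS X Y K a b HX HY HK Ha Hb A z. symmetry. apply HS; auto. Qed.
Lemma H_colim H : strengthened_arity H -> forall (X : nat -> Functor) (x : forall n, Nt (X n) (X (S n)))
     (L : Functor) (l : forall n, Nt (X n) L),
     (forall n, ocf (X n)) -> (forall n, natural (x n)) ->
     is_colim_end x l ->
     is_colim_end (X := fun n => H (X n)) (fun n => Hmor H (x n)) (fun n => Hmor H (l n)).
Proof. intros HS; apply HS. Qed.
Lemma th_nat H : strengthened_arity H -> forall X Z (e : Nt IdF Z), ocf X -> ocf Z -> natural e ->
     natural (Hth H X e).
Proof. intros HS; apply HS. Qed.
Lemma th_nat2 H : strengthened_arity H -> forall X X' Z Z' (e : Nt IdF Z) (e' : Nt IdF Z') (a : Nt X X') (f : Nt Z Z'),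
     ocf X -> ocf X' -> ocf Z -> ocf Z' -> natural e -> natural e' ->
     natural a -> natural f -> (forall A y, f A (e A y) = e' A y) ->
     forall A z, Hth H X' e' A (hcomp (Hmor H a) f (A:=A) z) = Hmor H (hcomp a f) A (Hth H X e A z).
Proof. intros HS. intros. apply HS; auto. Qed.
Lemma th_id H : strengthened_arity H -> forall X, ocf X -> forall A z, Hth H X (idn IdF) A z = z.
Proof. intros HS X HX A z. apply HS; auto. Qed.
Lemma th_comp H : strengthened_arity H -> forall X Z1 Z2 (e1 : Nt IdF Z1) (e2 : Nt IdF Z2),
     ocf X -> ocf Z1 -> ocf Z2 -> natural e1 -> natural e2 ->
     forall A z, Hth H X (hcomp e1 e2) A z = Hth H (comp X Z1) e2 A (Hth H X e1 (Z2 A) z).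
Proof. intros HS. intros. apply HS; auto. Qed.

Lemma Hmor_ext H X Y (a b : Nt X Y) : (forall A x, a A x = b A x) -> forall A z, Hmor H a A z = Hmor H b A z.
Proof. intros E. replace b with a; auto. apply nt_ext; exact E. Qed.

Fixpoint Wc (H : ArityData) (n : nat) : Functor :=
  match n with 0 => EmptyF | S n => SumF IdF (H (Wc H n)) end.
Fixpoint wc (H : ArityData) (n : nat) : Nt (Wc H n) (Wc H (S n)) :=
  match n return Nt (Wc H n) (Wc H (S n)) with
  | 0 => fun A e => match e with end
  | S m => sum_nat IdF (Hmor H (wc H m)) end.

Lemma Wc_ocf H : strengthened_arity H -> forall n, ocf (Wc H n).
Proof. intros HS n; induction n; simpl. apply EmptyF_ocf. apply sumI_ocf, H_ocf; auto. Qed.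
Lemma wc_nat H : strengthened_arity H -> forall n, natural (wc H n).
Proof.
  intros HS n; induction n; simpl.
  - intros A B f e; destruct e.
  - apply natural_sum. apply H_nat; [exact HS | apply (Wc_ocf H HS) | apply (Wc_ocf H HS (S n)) | exact IHn].
Qed.

Fixpoint tc (H : ArityData) (T : Functor) (alpha : Nt (SumF IdF (H T)) T) (n : nat) : Nt (Wc H n) T :=
  match n return Nt (Wc H n) T with
  | 0 => fun A e => match e with end
  | S m => vcomp alpha (sum_nat IdF (Hmor H (tc H T alpha m))) end.

Lemma tc_nat H T alpha : strengthened_arity H -> initial_algebra H T alpha -> forall n, natural (tc H T alpha n).
Proof.
  intros HS I n; induction n; simpl.
  - intros A B f e; destruct e.
  - apply natural_vcomp. apply natural_sum. apply H_nat; auto. apply Wc_ocf; auto. apply I. apply I.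
Qed.

Lemma tc_cocone H T alpha : strengthened_arity H -> initial_algebra H T alpha ->
  forall n A x, tc H T alpha (S n) A (wc H n A x) = tc H T alpha n A x.
Proof.
  intros HS I n; induction n; intros A x.
  - destruct x.
  - destruct x as [y|z]; simpl; unfold vcomp; simpl. reflexivity.
    f_equal. f_equal.
    rewrite (H_comp H HS _ _ _ (wc H n) (tc H T alpha (S n)) (Wc_ocf H HS n) (Wc_ocf H HS (S n)) (proj1 I) (wc_nat H HS n) (tc_nat H T alpha HS I (S n))).
    apply Hmor_ext. intros; apply IHn.
Qed.

Lemma T_colim H T alpha : strengthened_arity H -> initial_algebra H T alpha ->
  forall A, is_colim_set (A := fun n => Wc H n A) (fun n => wc H n A) (fun n => tc H T alpha n A).
Proof.
  intros HS I.
  pose proof (Wc_ocf H HS) as Wo. pose proof (wc_nat H HS) as wn.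
  pose proof (tc_nat H T alpha HS I) as tn.
  pose proof (tc_cocone H T alpha HS I) as tcc.
  destruct I as [To [alphan Iu]].
  set (Wi := ColimF (Wc H) (wc H)).
  set (io := cfi (Wc H) (wc H)).
  pose proof (ColimF_end (Wc H) (wc H) wn Wo) as Hi.
  assert (Wio : ocf Wi) by apply Hi.
  assert (ion : forall n, natural (io n)) by apply Hi.
  assert (ioc : forall n A y, io (S n) A (wc H n A y) = io n A y) by (intros; apply Hi).
  pose proof (H_colim H HS _ _ _ _ Wo wn Hi) as HHi.
  set (dd := fun n (A : Type) (z : H (Wc H n) A) => io (S n) A (inr z)).
  assert (ddn : forall n, natural (dd n)).
  { intros n A B f z. exact (ion (S n) A B f (inr z)). }
  assert (ddc : forall n, neq (vcomp (dd (S n)) (Hmor H (wc H n))) (dd n)).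
  { intros n A z. exact (ioc (S n) A (inr z)). }
  destruct (proj2 (proj2 (proj2 HHi)) Wi dd Wio ddn ddc) as [bi [bin [bic _]]].
  set (beta := fun A (s : (A + H Wi A)%type) => match s with inl y => io 1 A (inl y) | inr z => bi A z end
               : Wi A).
  assert (betan : natural (F := SumF IdF (H Wi)) beta).
  { intros A B f [y|z]; simpl.
    - exact (ion 1 A B f (inl y)).
    - apply bin. }
  destruct (Iu Wi beta Wio betan) as [k [kn [kc _]]].
  destruct (proj2 (proj2 (proj2 Hi)) T (tc H T alpha) To tn (fun n A x => tcc n A x)) as [j [jn [jc _]]].
  assert (io1 : forall n A y, io (S n) A (inl y) = io 1 A (inl y)).
  { intros n; induction n; intros A y; [reflexivity|].
    rewrite <- IHn. exact (ioc (S n) A (inl y)). }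
  assert (ktc : forall n A x, k A (tc H T alpha n A x) = io n A x).
  { intros n; induction n; intros A x; [destruct x|].
    destruct x as [y|z].
    - pose proof (kc A (inl y)) as E. unfold vcomp, sum_nat in E. simpl.
      unfold vcomp, sum_nat. rewrite E. simpl. symmetry; apply io1.
    - pose proof (kc A (inr (Hmor H (tc H T alpha n) A z))) as E. unfold vcomp, sum_nat in E. simpl.
      unfold vcomp, sum_nat. rewrite E. simpl.
      rewrite (H_comp H HS _ _ _ (tc H T alpha n) k (Wo n) To Wio (tn n) kn).
      rewrite (Hmor_ext H _ _ _ (io n) IHn).
      exact (bic n A z). }
  assert (Jbi : forall A w, j A (bi A w) = alpha A (inr (Hmor H j A w))).
  { intros A.
    pose proof (end_pointwise _ _ _ _ (fun n => H_nat H HS _ _ _ (Wo n) (Wo (S n)) (wn n))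
                  (fun n => H_ocf H HS _ (Wo n)) HHi A) as P.
    apply (colim_ext P). intros n v. simpl.
    pose proof (bic n A v) as E. unfold vcomp in E. rewrite E. unfold dd.
    pose proof (jc (S n) A (inr v)) as E2. unfold vcomp in E2. transitivity (tc H T alpha (S n) A (inr v)); [exact E2|]. simpl. unfold vcomp, sum_nat.
    rewrite (H_comp H HS _ _ _ (io n) j (Wo n) Wio To (ion n) jn).
    rewrite (Hmor_ext H _ _ (vcomp j (io n)) (tc H T alpha n) (jc n)). reflexivity. }
  destruct (Iu T alpha To alphan) as [h0 [_ [_ Hu]]].
  assert (jk : forall A z, j A (k A z) = z).
  { intros A z.
    assert (E1 : neq (vcomp j k) h0).
    { apply Hu. apply natural_vcomp; auto.
      intros B [y|w].
      - unfold vcomp. pose proof (kc B (inl y)) as E. unfold vcomp, sum_nat in E. rewrite E. simpl.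
        pose proof (jc 1 B (inl y)) as E2. unfold vcomp in E2. exact E2.
      - unfold vcomp. pose proof (kc B (inr w)) as E. unfold vcomp, sum_nat in E. rewrite E. simpl.
        rewrite Jbi. unfold sum_nat. f_equal. f_equal.
        exact (H_comp H HS _ _ _ k j To Wio To kn jn B w). }
    assert (E2 : neq (idn T) h0).
    { apply Hu. apply natural_idn.
      intros B [y|w]; unfold vcomp, sum_nat; [reflexivity|].
      rewrite (H_id H HS T To). reflexivity. }
    transitivity (h0 A z). apply E1. symmetry. apply E2. }
  assert (kj : forall A z, k A (j A z) = z).
  { intros A. apply (colim_ext (Colim_is (fun n => wc H n A)) _ (fun z => k A (j A z)) (fun z => z)).
    intros n y. change (cinj (fun n => wc H n A) n y) with (io n A y).
    transitivity (k A (tc H T alpha n A y)); [f_equal; exact (jc n A y)| exact (ktc n A y)]. }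
  intro A.
  apply (colim_iso (Colim_is (fun n => wc H n A)) (T A) _ (j A) (k A)).
  - intros n y. exact (jc n A y).
  - apply jk.
  - apply kj.
Qed.

Lemma T_end H T alpha : strengthened_arity H -> initial_algebra H T alpha ->
  is_colim_end (wc H) (tc H T alpha).
Proof.
  intros HS I. apply pw_to_end.
  - apply I.
  - apply tc_nat; auto.
  - intros n A x. apply tc_cocone; auto.
  - apply T_colim; auto.
Qed.

Lemma th_whisk H (HS : strengthened_arity H) Y Y' (a : Nt Y Y') Z (e : Nt IdF Z) :
  ocf Y -> ocf Y' -> ocf Z -> natural e -> natural a ->
  forall A v, Hth H Y' e A (Hmor H a (Z A) v) = Hmor H (whiskerR a Z) A (Hth H Y e A v).
Proof.
  intros HY HY' HZ He Ha A v.
  assert (E : Hmor H a (Z A) v = hcomp (Hmor H a) (idn Z) (A:=A) v).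
  { unfold hcomp. symmetry. apply fmap_id'. apply (H_ocf H HS Y' HY'). reflexivity. }
  rewrite E.
  rewrite (th_nat2 H HS Y Y' Z Z e e a (idn Z) HY HY' HZ HZ He He Ha (natural_idn Z) (fun _ _ => eq_refl) A v).
  apply Hmor_ext. intros B x. unfold hcomp, whiskerR. apply (fmap_id' Y' (proj1 HY') (Z B) (idn Z B)). reflexivity.
Qed.

Fixpoint hg (H : ArityData) (Z : Functor) (e : Nt IdF Z) (X : Functor) (f : Nt Z X) (g : Nt (H X) X) (n : nat) : Nt (comp (Wc H n) Z) X :=
  match n return Nt (comp (Wc H n) Z) X with
  | 0 => fun A v => match v with end
  | S m => fun A x => match x with
                      | inl y => f A y
                      | inr z => g A (Hmor H (hg H Z e X f g m) A (Hth H (Wc H m) e A z)) end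
  end.

Lemma GI H T alpha (HS : strengthened_arity H) (I : initial_algebra H T alpha)
  Z (e : Nt IdF Z) X (f : Nt Z X) (g : Nt (H X) X) :
  ocf Z -> natural e -> ocf X -> natural f -> natural g ->
  exists h : Nt (comp T Z) X, natural h /\
   (forall A x, h A (alpha (Z A) x) = match x with inl y => f A y
                                      | inr z => g A (Hmor H h A (Hth H T e A z)) end) /\
   forall h' : Nt (comp T Z) X, natural h' ->
     (forall A x, h' A (alpha (Z A) x) = match x with inl y => f A y
                                      | inr z => g A (Hmor H h' A (Hth H T e A z)) end) ->
     forall A x, h' A x = h A x.
Proof.
  intros HZ He HX Hf Hg.
  pose proof (Wc_ocf H HS) as Wo. pose proof (wc_nat H HS) as wn.
  pose proof (tc_nat H T alpha HS I) as tn.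
  assert (To : ocf T) by apply I.
  assert (WZo : forall n, ocf (comp (Wc H n) Z)) by (intro n; apply comp_ocf; auto).
  set (hn := hg H Z e X f g).
  assert (hnn : forall n, natural (hn n)).
  { intro n; induction n.
    - intros A B k x; destruct x.
    - intros A B k [y|z].
      + exact (Hf A B k y).
      + change (g B (Hmor H (hn n) B (Hth H (Wc H n) e B (fmap (comp (H (Wc H n)) Z) k z)))
                = fmap X k (g A (Hmor H (hn n) A (Hth H (Wc H n) e A z)))).
        rewrite (th_nat H HS (Wc H n) Z e (Wo n) HZ He A B k z).
        rewrite (H_nat H HS _ _ (hn n) (WZo n) HX IHn).
        apply Hg. }
  assert (hnc : forall n A x, hn (S n) A (wc H n (Z A) x) = hn n A x).
  { intro n; induction n; intros A x; [destruct x|].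
    destruct x as [y|z]; [reflexivity|].
    change (g A (Hmor H (hn (S n)) A (Hth H (Wc H (S n)) e A (Hmor H (wc H n) (Z A) z)))
            = g A (Hmor H (hn n) A (Hth H (Wc H n) e A z))).
    rewrite (th_whisk H HS _ _ (wc H n) Z e (Wo n) (Wo (S n)) HZ He (wn n)).
    rewrite (H_comp H HS _ _ _ (whiskerR (wc H n) Z) (hn (S n)) (WZo n) (WZo (S n)) HX
               (natural_whisker _ _ _ _ (wn n)) (hnn (S n))).
    f_equal. apply Hmor_ext. intros B x. apply IHn. }
  pose proof (T_colim H T alpha HS I) as TC.
  set (h := fun A => med (TC (Z A)) (X A) (fun n => hn n A) (fun n x => hnc n A x) : comp T Z A -> X A).
  assert (hs : forall n A x, h A (tc H T alpha n (Z A) x) = hn n A x).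
  { intros n A x. exact (med_spec (TC (Z A)) (X A) (fun n => hn n A) (fun n x => hnc n A x) n x). }
  assert (hnat : natural (F := comp T Z) h).
  { intros A B k z. revert z.
    apply (colim_ext (TC (Z A)) _ (fun z => h B (fmap (comp T Z) k z)) (fun z => fmap X k (h A z))).
    intros n x. simpl.
    rewrite <- (tn n _ _ (fmap Z k) x). rewrite !hs. exact (hnn n A B k x). }
  pose proof (end_pointwise _ _ _ _ (fun n => H_nat H HS _ _ _ (Wo n) (Wo (S n)) (wn n))
                  (fun n => H_ocf H HS _ (Wo n)) (H_colim H HS _ _ _ _ Wo wn (T_end H T alpha HS I))) as HTc.
  assert (thtc : forall (h0 : Nt (comp T Z) X), natural h0 -> forall n A v,
     Hmor H h0 A (Hth H T e A (Hmor H (tc H T alpha n) (Z A) v))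
     = Hmor H (fun B (x : comp (Wc H n) Z B) => h0 B (tc H T alpha n (Z B) x)) A (Hth H (Wc H n) e A v)).
  { intros h0 h0n n A v.
    rewrite (th_whisk H HS _ _ (tc H T alpha n) Z e (Wo n) To HZ He (tn n)).
    rewrite (H_comp H HS _ _ _ (whiskerR (tc H T alpha n) Z) h0 (WZo n) (comp_ocf _ _ To HZ) HX
               (natural_whisker _ _ _ _ (tn n)) h0n).
    reflexivity. }
  exists h. split; [exact hnat|split].
  - intros A [y|z].
    + change (h A (tc H T alpha 1 (Z A) (inl y)) = f A y). rewrite hs. reflexivity.
    + revert z.
      apply (colim_ext (HTc (Z A)) _ (fun z => h A (alpha (Z A) (inr z)))
                 (fun z => g A (Hmor H h A (Hth H T e A z)))).
      intros n v. simpl.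
      change (h A (tc H T alpha (S n) (Z A) (inr v)) = g A (Hmor H h A (Hth H T e A (Hmor H (tc H T alpha n) (Z A) v)))).
      rewrite hs. rewrite (thtc h hnat). change (g A (Hmor H (hn n) A (Hth H (Wc H n) e A v)) = g A (Hmor H (fun (B : Type) (x : comp (Wc H n) Z B) => h B (tc H T alpha n (Z B) x)) A (Hth H (Wc H n) e A v))). f_equal. apply Hmor_ext. intros B x. symmetry. apply hs.
  - intros h' h'n h'e.
    assert (E : forall n A x, h' A (tc H T alpha n (Z A) x) = hn n A x).
    { intro n; induction n; intros A x; [destruct x|].
      destruct x as [y|v].
      - exact (h'e A (inl y)).
      - change (h' A (alpha (Z A) (inr (Hmor H (tc H T alpha n) (Z A) v)))
                = g A (Hmor H (hn n) A (Hth H (Wc H n) e A v))).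
        rewrite h'e. rewrite (thtc h' h'n). f_equal. apply Hmor_ext. intros B x. apply IHn. }
    intros A x. apply (med_uniq (TC (Z A))). intros n y. apply E.
Qed.

Lemma IdF_ocf : ocf IdF.
Proof. split. split; reflexivity. intros A a C c Hc. exact Hc. Qed.

Theorem lemma1 (H : ArityData) (T : Functor) (alpha : Nt (SumF IdF (H T)) T) :
  strengthened_arity H ->
  initial_algebra H T alpha ->
  ocf T /\
  exists (eta : Nt IdF T) (mu : Nt (comp T T) T) (r : Nt (H T) T),
    is_representation H T eta mu r /\
    forall (S : Functor) (etaS : Nt IdF S) (muS : Nt (comp S S) S)
           (s : Nt (H S) S),
      is_representation H S etaS muS s ->
      (exists m : Nt T S, rep_morphism H T S eta mu r etaS muS s m) /\
      (forall m1 m2 : Nt T S,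
         rep_morphism H T S eta mu r etaS muS s m1 ->
         rep_morphism H T S eta mu r etaS muS s m2 -> neq m1 m2).
Proof.
  intros HS I.
  pose proof I as [To [alphan Iu]].
  split; [exact To|].
  pose (eta := (fun A (y : A) => alpha A (inl y)) : Nt IdF T).
  pose (r := (fun A (z : H T A) => alpha A (inr z)) : Nt (H T) T).
  assert (etan : natural (F := IdF) eta) by (intros A B k y; exact (alphan A B k (inl y))).
  assert (rn : natural (F := H T) r) by (intros A B k z; exact (alphan A B k (inr z))).
  assert (TTo : ocf (comp T T)) by (apply comp_ocf; auto).
  assert (TF : is_functor T) by apply To.
  destruct (GI H T alpha HS I T eta T (idn T) r To etan To (natural_idn T) rn) as [mu [mun [mue _]]].
  assert (M1 : forall A x, mu A (eta (T A) x) = x) by (intros A x; exact (mue A (inl x))).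
  assert (alN : forall A B (k : A -> B) s, fmap T k (alpha A s) = alpha B (fmap (SumF IdF (H T)) k s))
    by (intros; symmetry; apply alphan).
  assert (M2 : forall A x, mu A (fmap T (eta A) x) = x).
  { destruct (GI H T alpha HS I IdF (idn IdF) T eta r IdF_ocf (natural_idn IdF) To etan rn)
      as [h0 [_ [_ u0]]].
    assert (E1 : forall A x, (fun A x => mu A (fmap T (eta A) x)) A x = h0 A x).
    { apply u0.
      - apply (natural_vcomp (comp T IdF) (comp T T) T mu (hcomp (idn T) eta)); auto.
        apply natural_hcomp; auto. apply natural_idn.
      - intros A [y|z]; cbv beta.
        + rewrite alN. exact (mue A (inl (eta A y))).
        + rewrite alN. simpl. rewrite (mue A (inr _)).
          rewrite (th_id H HS T To A z). unfold r. f_equal. f_equal.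
          assert (E : fmap (H T) (eta A) z = hcomp (Hmor H (idn T)) eta (A:=A) z).
          { unfold hcomp. rewrite (H_id H HS T To). reflexivity. }
          transitivity (Hmor H mu A (Hth H T eta A (hcomp (Hmor H (idn T)) eta (A:=A) z))); [f_equal; f_equal; exact E|].
          rewrite (th_nat2 H HS T T IdF T (idn IdF) eta (idn T) eta To To IdF_ocf To (natural_idn _) etan
                      (natural_idn T) etan (fun _ _ => eq_refl) A z).
          rewrite (th_id H HS T To A z).
          rewrite (H_comp H HS _ _ _ (hcomp (idn T) eta) mu (comp_ocf _ _ To IdF_ocf) TTo To
                      (natural_hcomp _ _ _ _ _ _ TF (natural_idn T) etan) mun).
          reflexivity. }
    assert (E2 : forall A x, idn T A x = h0 A x).
    { apply u0. apply natural_idn.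
      intros A [y|z]; [reflexivity|].
      rewrite (th_id H HS T To A z). change (alpha A (inr z) = r A (Hmor H (X:=T) (Y:=T) (idn T) A z)). rewrite (H_id H HS T To). reflexivity. }
    intros A x. rewrite (E1 A x). symmetry. exact (E2 A x). }
  assert (ee : Nt IdF (comp T T)) by exact (hcomp eta eta).
  clear ee.
  assert (een : natural (hcomp eta eta)) by (apply natural_hcomp; auto).
  assert (TTTo : ocf (comp T (comp T T))) by (apply comp_ocf; auto).
  assert (Mr : forall A w, mu A (r (T A) w) = r A (Hmor H mu A (Hth H T eta A w)))
    by (intros A w; exact (mue A (inr w))).
  assert (M3 : forall A x, mu A (mu (T A) x) = mu A (fmap T (mu A) x)).
  { destruct (GI H T alpha HS I (comp T T) (hcomp eta eta) T mu r TTo een To mun rn)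
      as [h0 [_ [_ u0]]].
    assert (E1 : forall A x, (fun A x => mu A (mu (T A) x)) A x = h0 A x).
    { apply u0.
      - apply (natural_vcomp _ _ _ mu (whiskerR mu T)); auto. apply natural_whisker; auto.
      - intros A [y|z]; cbv beta.
        + exact (f_equal (mu A) (mue (T A) (inl y))).
        + transitivity (mu A (r (T A) (Hmor H mu (T A) (Hth H T eta (T A) z)))); [exact (f_equal (mu A) (mue (T A) (inr z)))|]. rewrite Mr. f_equal.
          rewrite (th_whisk H HS _ _ mu T eta TTo To To etan mun).
          rewrite (H_comp H HS _ _ _ (whiskerR mu T) mu TTTo TTo To (natural_whisker _ _ _ _ mun) mun).
          rewrite (th_comp H HS T T T eta eta To To To etan etan A z).
          reflexivity. }
    assert (E2 : forall A x, (fun A x => mu A (fmap T (mu A) x)) A x = h0 A x).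
    { apply u0.
      - apply (natural_vcomp _ _ _ mu (hcomp (idn T) mu)); auto. apply natural_hcomp; auto. apply natural_idn.
      - intros A [y|z]; cbv beta.
        + rewrite alN. exact (mue A (inl (mu A y))).
        + rewrite alN. simpl. rewrite (mue A (inr _)). cbv beta iota. f_equal.
          assert (E : fmap (H T) (mu A) z = hcomp (Hmor H (idn T)) mu (A:=A) z).
          { unfold hcomp. rewrite (H_id H HS T To). reflexivity. }
          transitivity (Hmor H mu A (Hth H T eta A (hcomp (Hmor H (idn T)) mu (A:=A) z))); [f_equal; f_equal; exact E|].
          rewrite (th_nat2 H HS T T (comp T T) T (hcomp eta eta) eta (idn T) mu To To TTo To een etan
                      (natural_idn T) mun).
          2:{ intros B y. unfold hcomp. simpl. rewrite <- etan. apply M1. }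
          rewrite (H_comp H HS _ _ _ (hcomp (idn T) mu) mu TTTo TTo To
                      (natural_hcomp _ _ _ _ _ _ TF (natural_idn T) mun) mun).
          reflexivity. }
    intros A x. rewrite (E1 A x). symmetry. exact (E2 A x). }
  exists eta, mu, r. split.
  { split; [exact To|]. split.
    - split; [exact TF|]. split; [exact etan|]. split; [exact mun|]. split; [exact M1|]. split; [exact M2|]. exact M3.
    - split; [exact rn|]. intros A z. unfold vcomp, tildeH_action, whiskerR. symmetry. apply Mr. }
  intros S etaS muS s [So [[SF [etaSn [muSn [MS1 [MS2 MS3]]]]] [sn sm]]].
  pose (beta := (fun A (x : (A + H S A)%type) => match x with inl y => etaS A y | inr z => s A z end)
                : Nt (SumF IdF (H S)) S).
  assert (betan : natural beta).
  { intros A B k [y|z]; simpl. apply etaSn. apply sn. }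
  destruct (Iu S beta So betan) as [m [mn [mc mu_]]].
  assert (SSo : ocf (comp S S)) by (apply comp_ocf; auto).
  assert (alg : forall m' : Nt T S, rep_morphism H T S eta mu r etaS muS s m' ->
            neq (vcomp m' alpha) (vcomp beta (sum_nat IdF (Hmor H m')))).
  { intros m' [[_ [Hm1 _]] Hm2] A [y|z]. apply Hm1. apply Hm2. }
  split.
  - exists m. split; [split; [exact mn|split]|].
    + intros A y. exact (mc A (inl y)).
    + destruct (GI H T alpha HS I T eta S m s To etan So mn sn) as [h0 [_ [_ u0]]].
      assert (E1 : forall A x, vcomp m mu (A:=A) x = h0 A x).
      { apply u0. apply natural_vcomp; auto.
        intros A [y|z]; unfold vcomp.
        - rewrite (mue A (inl y)). reflexivity.
        - rewrite (mue A (inr z)). cbv beta iota. unfold r. transitivity (s A (Hmor H m A (Hmor H mu A (Hth H T eta A z)))); [exact (mc A (inr _))|].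
          f_equal. apply (H_comp H HS _ _ _ mu m TTo To So mun mn). }
      assert (E2 : forall A x, vcomp muS (hcomp m m) (A:=A) x = h0 A x).
      { apply u0. apply natural_vcomp; auto. apply natural_hcomp; auto.
        intros A [y|z]; unfold vcomp, hcomp.
        - transitivity (muS A (fmap S (m A) (etaS (T A) y))); [do 2 f_equal; exact (mc (T A) (inl y))|].
          transitivity (muS A (etaS (S A) (m A y))); [f_equal; symmetry; exact (etaSn _ _ (m A) y)| apply MS1].
        - transitivity (muS A (fmap S (m A) (s (T A) (Hmor H m (T A) z)))); [do 2 f_equal; exact (mc (T A) (inr z))|].
          transitivity (muS A (s (S A) (fmap (H S) (m A) (Hmor H m (T A) z)))); [f_equal; symmetry; exact (sn _ _ (m A) _)|].
          pose proof (sm A (fmap (H S) (m A) (Hmor H m (T A) z))) as E. unfold vcomp, tildeH_action, whiskerR in E.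
          transitivity (s A (Hmor H muS A (Hth H S etaS A (fmap (H S) (m A) (Hmor H m (T A) z))))); [symmetry; exact E|].
          f_equal.
          change (fmap (H S) (m A) (Hmor H m (T A) z)) with (hcomp (Hmor H m) m (A:=A) z).
          rewrite (th_nat2 H HS T S T S eta etaS m m To So To So etan etaSn mn mn (fun B y => mc B (inl y)) A z).
          apply (H_comp H HS _ _ _ (hcomp m m) muS TTo SSo So (natural_hcomp _ _ _ _ _ _ SF mn mn) muSn). }
      intros A x. rewrite (E1 A x). symmetry. exact (E2 A x).
    + intros A z. exact (mc A (inr z)).
  - intros m1 m2 H1 H2 A x.
    assert (n1 : natural m1) by apply H1. assert (n2 : natural m2) by apply H2.
    rewrite (mu_ m1 n1 (alg m1 H1)). symmetry. exact (mu_ m2 n2 (alg m2 H2) A x).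
Qed.
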